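(* In the setting below, if $C$ is Euclidean LCD, then $g(x)$ is self-reciprocal.
   Context: Let $q$ be a prime power, $F=\mathbb{F}_q$, $m\ge1$ with $\gcd(q,m)=1$, and $R=F[x]/\langle x^m-1\rangle$; elements of $R$ are represented by polynomials of degree $<m$ and identified with their coefficient vectors in $F^m$. A quasi-cyclic code of length $2m$ and index $2$ is an $R$-submodule $C\subseteq R^2$. The Euclidean inner product of $(a_1,a_2),(b_1,b_2)\in R^2$ is the sum of the standard dot products of the coefficient vectors of $a_1,b_1$ and of $a_2,b_2$; $C$ is Euclidean LCD if $C\cap C^{\perp_e}=\{0\}$. For a nonzero polynomial $f$ of degree $k$, $f^*(x)=x^kf(x^{-1})$; $f$ is self-reciprocal if $f^*=\alpha f$ for some $\alpha\in F$. Suppose $C$ is generated as an $R$-module by $(g_{11}(x),g_{12}(x))$ and $(0,g_{22}(x))$, where $g_{11},g_{12},g_{22}\in F[x]$ satisfy: $g_{11}\mid x^m-1$, $g_{22}\mid x^m-1$, $\deg g_{12}<\deg g_{22}$, and $g_{11}g_{22}\mid (x^m-1)g_{12}$. Let $g=\gcd(g_{11},g_{22})$. *)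

(* Defs.v *)
From HB Require Import structures.
From mathcomp Require Import all_boot all_order all_algebra all_field.
Set Implicit Arguments. Unset Strict Implicit. Unset Printing Implicit Defensive.
Import GRing.Theory.
Local Open Scope ring_scope.

(* Elements of R = F[x]/<x^m - 1> are represented by polynomials of degree < m,
   i.e. canonical remainders modulo x^m - 1. *)
Definition xm1 (F : fieldType) (m : nat) : {poly F} := 'X^m - 1.

Definition qc_code (F : fieldType) (m : nat) (g11 g12 g22 : {poly F})
    (c : {poly F} * {poly F}) : Prop :=
  exists a b : {poly F},
    c.1 = (a * g11) %% xm1 F m /\ c.2 = (a * g12 + b * g22) %% xm1 F m.

Definition eucl_ip (F : fieldType) (m : nat) (c d : {poly F} * {poly F}) : F :=
  \sum_(i < m) (c.1)`_i * (d.1)`_i + \sum_(i < m) (c.2)`_i * (d.2)`_i.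

Definition inR2 (F : fieldType) (m : nat) (c : {poly F} * {poly F}) : Prop :=
  (size c.1 <= m)%N /\ (size c.2 <= m)%N.

Definition eucl_dual (F : fieldType) (m : nat)
    (C : {poly F} * {poly F} -> Prop) (d : {poly F} * {poly F}) : Prop :=
  inR2 m d /\ forall c, C c -> eucl_ip m c d = 0.

Definition eucl_LCD (F : fieldType) (m : nat)
    (C : {poly F} * {poly F} -> Prop) : Prop :=
  forall c, C c -> eucl_dual m C c -> c = (0, 0).

(* Reciprocal f*(x) = x^k f(x^{-1}), k = deg f. *)
Definition recip (F : fieldType) (f : {poly F}) : {poly F} :=
  \poly_(i < size f) f`_(size f - 1 - i).

Definition self_reciprocal (F : fieldType) (f : {poly F}) : Prop :=
  f != 0 /\ exists alpha : F, recip f = alpha *: f.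

(* Main.v *)
Require Import Defs.
From HB Require Import structures.
From mathcomp Require Import all_boot all_order all_algebra all_field all_fingroup all_solvable.
From mathcomp Require Import zify ring.
Import GRing.Theory.
Local Open Scope ring_scope.

Section Rv.
Variable F : fieldType.

Definition rv (n : nat) (f : {poly F}) : {poly F} := \poly_(i < n) f`_(n.-1 - i).

Lemma coef_rv n f i : (rv n f)`_i = if (i < n)%N then f`_(n.-1 - i) else 0.
Proof. by rewrite coef_poly. Qed.

Lemma recip_rv f : recip f = rv (size f) f.
Proof. by apply/polyP => i; rewrite coef_poly coef_rv subn1. Qed.

Lemma rvD n f g : rv n (f + g) = rv n f + rv n g.
Proof. by apply/polyP => i; rewrite coefD !coef_rv coefD; case: ifP; rewrite ?addr0. Qed.

Lemma rvZ n c f : rv n (c *: f) = c *: rv n f.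
Proof. by apply/polyP => i; rewrite coefZ !coef_rv coefZ; case: ifP; rewrite ?mulr0. Qed.

Lemma rv0 n : rv n 0 = 0.
Proof. by apply/polyP => i; rewrite coef_rv !coef0 if_same. Qed.

Lemma rv_sum n (I : Type) (r : seq I) (P : pred I) (G : I -> {poly F}) :
  rv n (\sum_(i <- r | P i) G i) = \sum_(i <- r | P i) rv n (G i).
Proof. elim/big_rec2: _ => [|i x y _ <-]; by rewrite ?rv0 ?rvD. Qed.

Lemma rvXn n k : (k < n)%N -> rv n 'X^k = 'X^(n.-1 - k).
Proof.
move=> kn; apply/polyP => i; rewrite coef_rv !coefXn.
case: ifP => hi.
  by case: eqP => h1; case: eqP => h2 //; lia.
by case: eqP => // ?; lia.
Qed.

Lemma poly_sum_ord n (f : {poly F}) : (size f <= n)%N -> f = \sum_(i < n) f`_i *: 'X^i.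
Proof.
move=> hf; rewrite -poly_def; apply/polyP => i; rewrite coef_poly.
case: ltnP => // hi; rewrite nth_default //; exact: leq_trans hf hi.
Qed.

Arguments poly_sum_ord {n f}.

Lemma rvE n (f : {poly F}) : (size f <= n)%N -> rv n f = \sum_(i < n) f`_i *: 'X^(n.-1 - i).
Proof.
move=> hf; rewrite {1}(poly_sum_ord hf) rv_sum; apply: eq_bigr => i _.
by rewrite rvZ rvXn.
Qed.

Arguments rvE {n f}.

Lemma rv_mul a b (f g : {poly F}) : (0 < a)%N -> (0 < b)%N -> (size f <= a)%N -> (size g <= b)%N ->
  rv (a + b).-1 (f * g) = rv a f * rv b g.
Proof.
move=> a0 b0 hf hg.
rewrite {1}(poly_sum_ord hf) {1}(poly_sum_ord hg) (rvE hf) (rvE hg).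
rewrite !mulr_suml rv_sum; apply: eq_bigr => i _.
rewrite !mulr_sumr rv_sum; apply: eq_bigr => j _.
rewrite -scalerAl -scalerAr scalerA rvZ -scalerAl -scalerAr scalerA -!exprD rvXn.
  by congr (_ *: 'X^_); have := ltn_ord i; have := ltn_ord j; lia.
by have := ltn_ord i; have := ltn_ord j; lia.
Qed.

Lemma rv_rv n (f : {poly F}) : (size f <= n)%N -> rv n (rv n f) = f.
Proof.
move=> hf; apply/polyP => i; rewrite !coef_rv.
case: ifP => hi.
  have -> : (n.-1 - i < n)%N by lia.
  by congr (f`_ _); lia.
by rewrite nth_default //; move/negbT: hi; rewrite -leqNgt; exact: leq_trans.
Qed.

Lemma ip_rv n (u v : {poly F}) : (size v <= n.+1)%N ->
  \sum_(i < n.+1) u`_i * v`_i = (u * rv n.+1 v)`_n.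
Proof.
move=> hv; rewrite coefM; apply: eq_bigr => i _; rewrite coef_rv.
have -> : (n - i < n.+1)%N by lia.
by congr (_ * v`_ _); have := ltn_ord i; lia.
Qed.

Variable m : nat.
Hypothesis m0 : (0 < m)%N.
Local Notation xm := (xm1 F m).

Definition bar (w : {poly F}) := w \Po 'X^(m.-1).
Definition eqm (x y : {poly F}) := xm %| x - y.

Lemma eqm_refl x : eqm x x.
Proof. by rewrite /eqm subrr dvdp0. Qed.
Lemma eqm_sym x y : eqm x y -> eqm y x.
Proof. by rewrite /eqm -dvdpNr opprB. Qed.
Lemma eqm_trans x y z : eqm x y -> eqm y z -> eqm x z.
Proof.
rewrite /eqm => h1 h2; have -> : x - z = (x - y) + (y - z) by ring.
exact: dvdp_add.
Qed.
Lemma eqmD x y x' y' : eqm x x' -> eqm y y' -> eqm (x + y) (x' + y').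
Proof.
rewrite /eqm => h1 h2; have -> : x + y - (x' + y') = (x - x') + (y - y') by ring.
exact: dvdp_add.
Qed.
Lemma eqmM x y x' y' : eqm x x' -> eqm y y' -> eqm (x * y) (x' * y').
Proof.
rewrite /eqm => h1 h2; have -> : x * y - x' * y' = y * (x - x') + x' * (y - y') by ring.
by apply: dvdp_add; apply: dvdp_mull.
Qed.
Lemma eqm_mod x : eqm (x %% xm) x.
Proof.
rewrite /eqm {2}(divp_eq x xm); have -> : x %% xm - (x %/ xm * xm + x %% xm) = - (x %/ xm * xm) by ring.
by rewrite dvdpNr dvdp_mull.
Qed.
Lemma eqm0 x : eqm x 0 = (xm %| x).
Proof. by rewrite /eqm subr0. Qed.

Lemma xm_dvd_Xmk k : xm %| 'X^(m * k) - 1.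
Proof. by rewrite exprM subrX1 dvdp_mulr. Qed.

Lemma barM x y : bar (x * y) = bar x * bar y.
Proof. exact: comp_polyM. Qed.

Lemma bar_xm : xm %| bar xm.
Proof.
rewrite /bar /xm1 comp_polyB comp_Xn_poly comp_polyC -exprM mulnC.
exact: xm_dvd_Xmk.
Qed.

Lemma eqm_bar x y : eqm x y -> eqm (bar x) (bar y).
Proof.
rewrite /eqm => /dvdpP [q hq].
rewrite /bar -comp_polyB -/(bar _) hq barM.
exact: dvdp_mull bar_xm.
Qed.

Lemma bar_sum (I : Type) (r : seq I) (P : pred I) (G : I -> {poly F}) :
  bar (\sum_(i <- r | P i) G i) = \sum_(i <- r | P i) bar (G i).
Proof. elim/big_rec2: _ => [|i x y _ <-]; by rewrite /bar ?comp_poly0 ?comp_polyD. Qed.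

Lemma rv_bar n (w : {poly F}) : (0 < n)%N -> (size w <= n)%N -> eqm (rv n w) ('X^(n.-1) * bar w).
Proof.
move=> n0 hw; rewrite /eqm (rvE hw) {2}(poly_sum_ord hw) bar_sum mulr_sumr -sumrB.
elim/big_rec: _ => [|i x _ hx]; first by rewrite dvdp0.
apply: dvdp_add => //.
rewrite /bar comp_polyZ comp_Xn_poly -exprM -scalerAr -scalerBr -exprD.
have -> : (n.-1 + m.-1 * i = (n.-1 - i) + m * i)%N by have := ltn_ord i; nia.
rewrite exprD -mul_polyC.
have -> : 'X^(n.-1 - i) - 'X^(n.-1 - i) * 'X^(m * i) = - ('X^(n.-1 - i) * ('X^(m * i) - 1)) :> {poly F} by ring.
by rewrite mulrN dvdpNr !dvdp_mull // xm_dvd_Xmk.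
Qed.



Lemma size_xm : size xm = m.+1.
Proof. by rewrite /xm1 -polyC1 size_XnsubC. Qed.

Lemma xm0 : xm != 0.
Proof. by rewrite -size_poly_eq0 size_xm. Qed.

Lemma coef_mod_xm (w : {poly F}) : (size w <= (m + m).-1)%N -> (w %% xm)`_(m.-1) = w`_(m.-1).
Proof.
move=> hw; rewrite {2}(divp_eq w xm) coefD /xm1 mulrBr mulr1 coefB coefMXn.
have -> : (m.-1 < m)%N by lia.
have -> : (w %/ xm)`_(m.-1) = 0.
  apply: nth_default; rewrite size_divp ?xm0 // size_xm /= leq_subLR; apply: leq_trans hw _; lia.
by rewrite subrr add0r.
Qed.

Lemma size_mod_xm (p : {poly F}) : (size (p %% xm)%R <= m)%N.
Proof. by rewrite -ltnS -size_xm ltn_modp xm0. Qed.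

Lemma ip_eq (u v : {poly F}) : (size u <= m)%N -> (size v <= m)%N ->
  \sum_(i < m) u`_i * v`_i = ((u * rv m v) %% xm)`_(m.-1).
Proof.
move=> hu hv.
have hm : m = m.-1.+1 by lia.
transitivity (\sum_(i < m.-1.+1) u`_i * v`_i); first by rewrite -hm.
rewrite ip_rv -?hm // coef_mod_xm //.
apply: leq_trans (size_polyMleq _ _) _.
have := size_poly m (fun i => v`_(m.-1 - i)); rewrite -/(rv m v); lia.
Qed.

Lemma ortho (g H A B u1 u2 w1 w2 : {poly F}) : eqm (g * bar H) 0 ->
  eqm u1 (g * w1) -> eqm u2 (g * w2) -> (size u1 <= m)%N -> (size u2 <= m)%N ->
  eucl_ip m (u1, u2) ((H * A) %% xm, (H * B) %% xm) = 0.
Proof.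
move=> hg h1 h2 s1 s2.
rewrite /eucl_ip /= !ip_eq ?size_mod_xm // -coefD -modpD modp_eq0 ?coef0 //.
rewrite -eqm0 -[0](addr0 0).
have key : forall u w C, eqm u (g * w) -> eqm (u * rv m ((H * C) %% xm)) 0.
  move=> u w C hu.
  apply: (@eqm_trans _ (g * w * ('X^(m.-1) * (bar H * bar C)))).
    apply: eqmM hu _.
    apply: eqm_trans (rv_bar _ _ m0 (size_mod_xm _)) _.
    apply: eqmM (eqm_refl _) _; rewrite -barM; exact: eqm_bar (eqm_mod _).
  have -> : g * w * ('X^(m.-1) * (bar H * bar C)) = (g * bar H) * (w * 'X^(m.-1) * bar C) by ring.
  by rewrite -(mul0r (w * 'X^(m.-1) * bar C)); apply: eqmM hg (eqm_refl _).
by apply: eqmD; [exact: key h1 | exact: key h2].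
Qed.

Lemma sqfree_xm (d : {poly F}) : m%:R != 0 :> F -> d * d %| xm -> d %| 1.
Proof.
move=> hm /dvdpP [q hq].
have hd : d %| xm^`().
  rewrite hq !derivM.
  have -> : q^`() * (d * d) + q * (d^`() * d + d * d^`()) = d * (q^`() * d + q * d^`() *+ 2) by rewrite mulr2n; ring.
  exact: dvdp_mulr (dvdpp _).
move: hd; rewrite /xm1 derivB derivXn derivC subr0 -scaler_nat dvdpZr // => hX.
have -> : 1 = 'X^(m.-1) * 'X - xm.
  by rewrite -exprSr prednK // /xm1; ring.
apply: dvdp_sub; first exact: dvdp_mulr.
by rewrite hq dvdp_mull // dvdp_mulr.
Qed.

Lemma rv_xm : rv m.+1 xm = - xm.
Proof.
apply/polyP => i; rewrite coef_rv coefN /xm1 !coefB !coefXn !coef1 /=.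
case: ltnP => hi.
  have -> : ((m - i)%N == m) = (i == 0)%N by case: eqP => ?; case: eqP => ? //; lia.
  have -> : ((m - i)%N == 0)%N = (i == m) by case: eqP => ?; case: eqP => ? //; lia.
  by rewrite opprB.
have -> : (i == m) = false by case: eqP => ? //; lia.
have -> : (i == 0)%N = false by case: eqP => ? //; lia.
by rewrite subrr oppr0.
Qed.

Lemma main_field (g11 g12 g22 : {poly F}) : m%:R != 0 :> F ->
  g11 %| xm -> g22 %| xm -> g11 * g22 %| xm * g12 ->
  eucl_LCD m (qc_code m g11 g12 g22) -> self_reciprocal (gcdp g11 g22).
Proof.
move=> hm H11 H22 H12 hLCD.
set g := gcdp g11 g22.
have hg11 : g %| g11 := dvdp_gcdl _ _.
have hg22 : g %| g22 := dvdp_gcdr _ _.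
have gxm : g %| xm := dvdp_trans hg11 H11.
have g0 : g != 0.
  apply/eqP => g0; move: gxm; rewrite g0 dvd0p => /eqP h.
  by move: xm0; rewrite h eqxx.
have gc0 : g`_0 != 0.
  apply/negP => /eqP h.
  have : root g 0 by rewrite /root horner_coef0 h.
  move/(root_dvdp gxm); rewrite /root /xm1 !hornerE expr0n gtn_eqF //= sub0r oppr_eq0 oner_eq0.
  by [].
set n := size g.
have n0 : (0 < n)%N by rewrite size_poly_gt0.
set P := rv n g.
have hPrec : recip g = P by rewrite recip_rv.
have sizeP : size P = n.
  by rewrite /P /rv size_poly_eq // subnn.
have hPg : rv n P = g := rv_rv _ _ (leqnn _).
have [h hh] := dvdpP _ _ gxm.
have h0 : h != 0 by apply/eqP => h0; move: xm0; rewrite hh h0 mul0r eqxx.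
have Pxm : P %| xm.
  have sh : (0 < size h)%N by rewrite size_poly_gt0.
  have e := rv_mul _ _ _ _ sh n0 (leqnn _) (leqnn _).
  have hs : (size h + n).-1 = m.+1 by rewrite -size_mul // -hh size_xm.
  rewrite hs -hh rv_xm in e.
  by rewrite -dvdpNr e dvdp_mull.
case hPg' : (P %| g).
  split => //.
  have : P %= g by rewrite -dvdp_size_eqp // sizeP.
  case/eqpP => [[c1 c2] /= /andP [c10 c20] e].
  exists (c2 / c1); rewrite hPrec.
  by rewrite -[P]scale1r -(mulVf c10) -scalerA e scalerA mulrC.
exfalso.
set H := xm %/ P.
have HP : H * P = xm by rewrite divpK.
have H0 : H != 0 by apply/eqP => H0; move: xm0; rewrite -HP H0 mul0r eqxx.
have hGb : eqm (g * bar H) 0.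
  have e1 : eqm g ('X^(n.-1) * bar P).
    by rewrite -{1}hPg; apply: rv_bar => //; rewrite sizeP.
  apply: (@eqm_trans _ ('X^(n.-1) * bar P * bar H)); first exact: eqmM e1 (eqm_refl _).
  by rewrite -mulrA -barM (mulrC P H) HP eqm0 dvdp_mull // bar_xm.
have cop : coprimep g h.
  rewrite /coprimep -dvdp1; apply: (sqfree_xm _ hm).
  by rewrite hh dvdp_mul // ?dvdp_gcdl ?dvdp_gcdr.
have hg12 : g %| g12.
  rewrite -(Gauss_dvdpr _ cop) -(dvdp_mul2r _ _ g0).
  apply: dvdp_trans (dvdp_mul hg11 hg22) _.
  by rewrite (_ : h * g12 * g = xm * g12) // hh; ring.
have contra : forall A B : {poly F}, g %| A -> g %| B ->
    ~~ (xm %| H * A) || ~~ (xm %| H * B) ->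
    qc_code m g11 g12 g22 ((H * A) %% xm, (H * B) %% xm) -> False.
  move=> A B _ _ hAB hC.
  have := hLCD _ hC.
  have hd : eucl_dual m (qc_code m g11 g12 g22) ((H * A) %% xm, (H * B) %% xm).
    split; first by split; apply: size_mod_xm.
    move=> [u1 u2] [a [b [/= e1 e2]]].
    apply: (ortho _ _ _ _ _ _ (a * (g11 %/ g)) (a * (g12 %/ g) + b * (g22 %/ g)) hGb).
    - rewrite e1; apply: eqm_trans (eqm_mod _) _.
      have -> : g * (a * (g11 %/ g)) = a * (g11 %/ g * g) by ring.
      by rewrite divpK //; apply: eqm_refl.
    - rewrite e2; apply: eqm_trans (eqm_mod _) _.
      have -> : g * (a * (g12 %/ g) + b * (g22 %/ g)) = a * (g12 %/ g * g) + b * (g22 %/ g * g) by ring.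
      by rewrite !divpK //; apply: eqm_refl.
    - by rewrite e1 size_mod_xm.
    - by rewrite e2 size_mod_xm.
  move=> /(_ hd) [/modp_eq0P hA /modp_eq0P hB].
  by rewrite hA hB in hAB.
move: hPg'; rewrite dvdp_gcd.
case hP22 : (P %| g22).
  rewrite andbT => hP11.
  apply: (contra g11 g12) => //.
    by rewrite -HP dvdp_mul2l // hP11.
  by exists H, 0; rewrite mul0r addr0.
move=> _.
apply: (contra 0 g22) => //; rewrite ?dvdp0 //.
  by rewrite -HP !dvdp_mul2l // hP22 orbT.
by exists 0, H; rewrite !mul0r mulr0 add0r.
Qed.

End Rv.

Lemma char_ok (F : finFieldType) (m : nat) : coprime #|F| m -> m%:R != 0 :> F.
Proof.
move=> cop; have [p pp pc] := finPcharP F.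
apply/negP => /eqP hm0.
have pm : (p %| m)%N by rewrite (dvdn_pcharf pc) hm0 eqxx.
have pF : (p %| #|F|)%N.
  rewrite (dvdn_pcharf pc).
  have := expg_cardG (in_setT (1 : F)).
  rewrite FinRing.zmodXgE cardsT => ->.
  by [].
have : (p %| gcdn #|F| m)%N by rewrite dvdn_gcd pF pm.
rewrite (eqP cop) dvdn1 => /eqP p1.
by rewrite p1 in pp.
Qed.

Theorem lemma3p2 (F : finFieldType) (m : nat) (g11 g12 g22 : {poly F}) :
  (0 < m)%N ->
  coprime #|F| m ->
  g11 %| xm1 F m ->
  g22 %| xm1 F m ->
  (size g12 < size g22)%N ->
  (g11 * g22) %| (xm1 F m * g12) ->
  eucl_LCD m (qc_code m g11 g12 g22) ->
  self_reciprocal (gcdp g11 g22).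
Proof.
move=> m0 cop H11 H22 _ H12 hLCD.
exact: (@main_field F m m0 g11 g12 g22 (@char_ok F m cop) H11 H22 H12 hLCD).
Qed.
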